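(* Consider the $T$-stage game $\Gamma_T(p,q)$, and let $x\in X_T(p)$ and $y\in Y_T(q)$ be realization plans of players 1 and 2. For every $l\in L$ and $k\in K$: at $t=0$, $$u_{l,0}(x)=\min_{\tau\in\Delta(B)}\Big(\sum_{k\in K}x_{k,\emptyset,\emptyset}^TM^{kl}+\mathbf 1^Tu_{l,\emptyset,\emptyset}(x)\Big)\tau,\qquad w_{k,0}(y)=\max_{\sigma\in\Delta(A)}\sigma^T\Big(\sum_{l\in L}M^{kl}y_{l,\emptyset,\emptyset}+w_{k,\emptyset,\emptyset}(y)\mathbf1\Big),$$ and for every $t=1,\dots,T-1$, $h^A\in A^{t-1}$, $h^B\in B^{t-1}$, $a\in A$, $b\in B$, $$u^{a,b}_{l,h^A,h^B}(x)=\min_{\tau\in\Delta(B)}\Big(\sum_{k\in K}x_{k,(h^A,a),(h^B,b)}^TM^{kl}+\mathbf1^Tu_{l,(h^A,a),(h^B,b)}(x)\Big)\tau,$$ $$w^{a,b}_{k,h^A,h^B}(y)=\max_{\sigma\in\Delta(A)}\sigma^T\Big(\sum_{l\in L}M^{kl}y_{l,(h^A,a),(h^B,b)}+w_{k,(h^A,a),(h^B,b)}(y)\mathbf1\Big).$$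
   Context: Setting: nonempty finite type sets $K,L$, action sets $A,B$, payoff $M:K\times L\times A\times B\to\mathbb R$ with $M^{kl}=(M(k,l,a,b))_{a,b}$ an $|A|\times|B|$ matrix; $p\in\Delta(K),q\in\Delta(L)$ with positive entries; $\mathbf 1$ all-ones vector. In $\Gamma_T(p,q)$, $k\sim p$, $l\sim q$ are drawn independently and told privately to players 1, 2; for $T$ stages both choose $a_t\in A,b_t\in B$ simultaneously, publicly announced; behavior strategies $\sigma_t:K\times A^{t-1}\times B^{t-1}\to\Delta(A)$, $\tau_t:L\times A^{t-1}\times B^{t-1}\to\Delta(B)$; payoff $\mathbb E[\sum_{t=1}^TM(k,l,a_t,b_t)]$ to player 1. Realization plans: the realization plan of $\sigma$ is $x^{a_t}_{k,h^A_t,h^B_t}=p^k\prod_{s=1}^t\sigma^{a_s}_s(k,h^A_s,h^B_s)$ for $t=1,\dots,T$, $h_t^A=(a_1,\dots,a_{t-1})$, $h_t^B=(b_1,\dots,b_{t-1})$ and prefixes $h_s$; $x_{k,h^A,h^B}\in\mathbb R^{|A|}$ is the vector over the last action. $X_T(p)$ is the set of such families satisfying $x\ge0$, $\mathbf1^Tx_{k,\emptyset,\emptyset}=p^k$, $\mathbf1^Tx_{k,(h^A,a),(h^B,b)}=x^a_{k,h^A,h^B}$ (concatenated histories); each $x\in X_T(p)$ corresponds to a behavior strategy $\sigma$ via ratios. $Y_T(q)$, $y_{l,h^A,h^B}\in\mathbb R^{|B|}$ are defined symmetrically for player 2. Weighted future security payoffs: for $x\in X_T(p)$ with strategy $\sigma$,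 $t\in\{1,\dots,T-1\}$, $h^A\in A^{t-1},h^B\in B^{t-1}$, $a,b$: $u^{a,b}_{l,h^A,h^B}(x)=\min_{\tau_{t+1:T}(l)}\sum_kx^a_{k,h^A,h^B}\,\mathbb E[\sum_{s=t+1}^TM(k,l,a_s,b_s)\mid k,l,h^A_{t+1}=(h^A,a),h^B_{t+1}=(h^B,b)]$, minimum over behavior strategies of player 2 of type $l$ at stages $t+1,\dots,T$; $u_{l,h^A,h^B}(x)$ denotes the $|A|\times|B|$ matrix with these entries; $u_{l,h^A,h^B}(x)=0$ for histories of length $T-1$ (i.e. stage $T$); and $u_{l,0}(x)=\min_{\tau(l)}\sum_kp^k\mathbb E[\sum_{s=1}^TM(k,l,a_s,b_s)\mid k,l]$. Symmetrically, for $y\in Y_T(q)$ with strategy $\tau$: $w^{a,b}_{k,h^A,h^B}(y)=\max_{\sigma_{t+1:T}(k)}\sum_ly^b_{l,h^A,h^B}\,\mathbb E[\sum_{s=t+1}^TM\mid k,l,(h^A,a),(h^B,b)]$, the matrix $w_{k,h^A,h^B}(y)$ (zero at stage $T$), and $w_{k,0}(y)=\max_{\sigma(k)}\sum_lq^l\mathbb E[\sum_{s=1}^TM\mid k,l]$. *)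

(* Defs.v *)
From HB Require Import structures.
From mathcomp Require Import all_boot all_order all_algebra.
From mathcomp Require Import classical_sets reals.
Set Implicit Arguments. Unset Strict Implicit. Unset Printing Implicit Defensive.
Import Order.TTheory GRing.Theory Num.Theory.
Local Open Scope classical_set_scope.
Local Open Scope ring_scope.

Section Game.
Variables (R : realType) (K L A B : finType).

Definition in_simplex (C : finType) (s : C -> R) : Prop :=
  (forall c, 0 <= s c) /\ \sum_(c : C) s c = 1.

Definition min_simplex (C : finType) (c : C -> R) : R :=
  inf [set v | exists tau : C -> R, in_simplex tau /\ v = \sum_(b : C) c b * tau b].
Definition max_simplex (C : finType) (c : C -> R) : R :=
  sup [set v | exists sig : C -> R, in_simplex sig /\ v = \sum_(a : C) sig a * c a].

(* Realization plans.  x k hA hB a = x^a_{k,hA,hB}, meaningful for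
   size hA = size hB = t-1 with t = 1..T; (h,a) is  rcons h a. *)
Definition realization_plan1 (T : nat) (p : K -> R)
  (x : K -> seq A -> seq B -> A -> R) : Prop :=
  [/\ forall k hA hB a, size hA = size hB -> (size hA < T)%N -> 0 <= x k hA hB a,
      forall k, \sum_(a : A) x k [::] [::] a = p k &
      forall k hA hB a b, size hA = size hB -> ((size hA).+1 < T)%N ->
        \sum_(a' : A) x k (rcons hA a) (rcons hB b) a' = x k hA hB a].

Definition realization_plan2 (T : nat) (q : L -> R)
  (y : L -> seq A -> seq B -> B -> R) : Prop :=
  [/\ forall l hA hB b, size hA = size hB -> (size hA < T)%N -> 0 <= y l hA hB b,
      forall l, \sum_(b : B) y l [::] [::] b = q l &
      forall l hA hB a b, size hA = size hB -> ((size hA).+1 < T)%N ->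
        \sum_(b' : B) y l (rcons hA a) (rcons hB b) b' = y l hA hB b].

Definition strat1 (sig : seq A -> seq B -> A -> R) : Prop :=
  forall hA hB, in_simplex (sig hA hB).
Definition strat2 (tau : seq A -> seq B -> B -> R) : Prop :=
  forall hA hB, in_simplex (tau hA hB).

(* Behavior strategy induced by a realization plan via ratios
   sigma_t^{a}(k,hA,hB) = x^a_{k,hA,hB} / x^{a_{t-1}}_{k,h^A_{t-1},h^B_{t-1}}
   (parent value p^k at the root); uniform when the parent weight is 0. *)
Definition parent1 (p : K -> R) (x : K -> seq A -> seq B -> A -> R)
  (k : K) (hA : seq A) (hB : seq B) : R :=
  match hA, hB with
  | a1 :: hA', b1 :: hB' => x k (belast a1 hA') (belast b1 hB') (last a1 hA')
  | _, _ => p k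
  end.
Definition beh1 (p : K -> R) (x : K -> seq A -> seq B -> A -> R) (k : K)
  : seq A -> seq B -> A -> R :=
  fun hA hB a => let d := parent1 p x k hA hB in
    if d == 0 then #|A|%:R^-1 else x k hA hB a / d.

Definition parent2 (q : L -> R) (y : L -> seq A -> seq B -> B -> R)
  (l : L) (hA : seq A) (hB : seq B) : R :=
  match hA, hB with
  | a1 :: hA', b1 :: hB' => y l (belast a1 hA') (belast b1 hB') (last b1 hB')
  | _, _ => q l
  end.
Definition beh2 (q : L -> R) (y : L -> seq A -> seq B -> B -> R) (l : L)
  : seq A -> seq B -> B -> R :=
  fun hA hB b => let d := parent2 q y l hA hB in
    if d == 0 then #|B|%:R^-1 else y l hA hB b / d.

(* Conditional expectation, given the types (through m = M(k,l,.,.)) and the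
   current public history (hA,hB), of the sum of the payoffs of the next n
   stages when the players use behavior strategies sig and tau. *)
Fixpoint cont_payoff (n : nat) (sig : seq A -> seq B -> A -> R)
  (tau : seq A -> seq B -> B -> R) (m : A -> B -> R) (hA : seq A) (hB : seq B) : R :=
  match n with
  | 0 => 0
  | n'.+1 => \sum_(a : A) \sum_(b : B) sig hA hB a * tau hA hB b *
              (m a b + cont_payoff n' sig tau m (rcons hA a) (rcons hB b))
  end.

Variables (T : nat) (M : K -> L -> A -> B -> R) (p : K -> R) (q : L -> R).

(* u^{a,b}_{l,hA,hB}(x), with t = size hA + 1; zero at stage T. *)
Definition u_ab (x : K -> seq A -> seq B -> A -> R) (l : L)
  (hA : seq A) (hB : seq B) (a : A) (b : B) : R :=
  if ((size hA).+1 < T)%N then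
    inf [set v | exists tau, strat2 tau /\
      v = \sum_(k : K) x k hA hB a *
            cont_payoff (T - (size hA).+1) (beh1 p x k) tau (M k l)
              (rcons hA a) (rcons hB b)]
  else 0.

Definition u_0 (x : K -> seq A -> seq B -> A -> R) (l : L) : R :=
  inf [set v | exists tau, strat2 tau /\
    v = \sum_(k : K) p k * cont_payoff T (beh1 p x k) tau (M k l) [::] [::]].

Definition w_ab (y : L -> seq A -> seq B -> B -> R) (k : K)
  (hA : seq A) (hB : seq B) (a : A) (b : B) : R :=
  if ((size hA).+1 < T)%N then
    sup [set v | exists sig, strat1 sig /\
      v = \sum_(l : L) y l hA hB b *
            cont_payoff (T - (size hA).+1) sig (beh2 q y l) (M k l)
              (rcons hA a) (rcons hB b)]
  else 0.

Definition w_0 (y : L -> seq A -> seq B -> B -> R) (k : K) : R :=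
  sup [set v | exists sig, strat1 sig /\
    v = \sum_(l : L) q l * cont_payoff T sig (beh2 q y l) (M k l) [::] [::]].

End Game.

(* Main.v *)
Require Import Defs.
From HB Require Import structures.
From mathcomp Require Import all_boot all_order all_algebra.
From mathcomp Require Import classical_sets reals boolp.
From mathcomp Require Import ring lra zify.
Set Implicit Arguments. Unset Strict Implicit. Unset Printing Implicit Defensive.
Import Order.TTheory GRing.Theory Num.Theory.
Local Open Scope classical_set_scope.
Local Open Scope ring_scope.

Section Core.
Variables (R : realType).

Lemma simplex_le1 (C : finType) (s : C -> R) c : in_simplex s -> s c <= 1.
Proof.
case=> s0 s1; rewrite -s1 (bigD1 c) //= lerDl; exact: sumr_ge0.
Qed.

Lemma uniform_simplex (C : finType) : (0 < #|C|)%N ->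
  in_simplex (fun _ : C => (#|C|%:R : R)^-1).
Proof.
move=> C0; split=> [c|]; first by rewrite invr_ge0 ler0n.
rewrite sumr_const (_ : #|xpredT| = #|C|) //; move: (#|C|) C0 => n n0; rewrite -[_ *+ n]mulr_natr mulVf // pnatr_eq0 -lt0n; lia.
Qed.

Lemma simplex_lb (C : finType) (s : C -> R) (d : C -> R) : in_simplex s ->
  - \sum_c `|d c| <= \sum_c s c * d c.
Proof.
move=> hs; rewrite -sumrN; apply: ler_sum => c _.
have s0 := hs.1 c; have s1 := simplex_le1 c hs.
have := ler_norm (- d c); rewrite normrN.
have [d0|d0] := lerP 0 (d c).
  by rewrite ger0_norm //; nra.
by rewrite ltr0_norm //; nra.
Qed.

Lemma simplex_ub (C : finType) (s : C -> R) (d : C -> R) : in_simplex s ->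
  \sum_c s c * d c <= \sum_c `|d c|.
Proof.
move=> hs; apply: ler_sum => c _.
have s0 := hs.1 c; have s1 := simplex_le1 c hs.
have [d0|d0] := lerP 0 (d c).
  by rewrite ger0_norm //; nra.
by rewrite ltr0_norm //; nra.
Qed.

Variables (A B : finType).

Lemma cont_local n (sig : seq A -> seq B -> A -> R) tau tau' m hA hB :
  (forall s1 s2, tau (hA ++ s1) (hB ++ s2) = tau' (hA ++ s1) (hB ++ s2)) ->
  cont_payoff n sig tau m hA hB = cont_payoff n sig tau' m hA hB.
Proof.
elim: n hA hB => [//|n IH] hA hB H /=.
have := H [::] [::]; rewrite !cats0 => ->.
apply: eq_bigr => a _; apply: eq_bigr => b _; congr (_ * (_ + _)).
apply: IH => s1 s2; rewrite !cat_rcons; exact: H.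
Qed.

Lemma sum_simplex2 (sig : A -> R) (tau : B -> R) (c : R) :
  in_simplex sig -> in_simplex tau ->
  \sum_a \sum_b sig a * tau b * c = c.
Proof.
move=> [_ s1] [_ t1].
under eq_bigr do rewrite -big_distrl -big_distrr /= t1 mulr1.
by rewrite -big_distrl /= s1 mul1r.
Qed.

Lemma cont_bound (N : nat) (sig : seq A -> seq B -> A -> R) tau m :
  (forall hA hB, size hA = size hB -> (size hA < N)%N -> in_simplex (sig hA hB)) ->
  strat2 tau ->
  forall n hA hB, size hA = size hB -> (size hA + n <= N)%N ->
  `|cont_payoff n sig tau m hA hB| <= n%:R * \sum_a \sum_b `|m a b|.
Proof.
move=> Hs Ht; elim=> [|n IH] hA hB Hsz HN /=; first by rewrite normr0 mul0r.
have hs := Hs hA hB Hsz ltac:(lia); have ht := Ht hA hB.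
set C := \sum_a \sum_b `|m a b|.
apply: (le_trans (ler_norm_sum _ _ _)).
apply: le_trans (_ : \sum_a \sum_b (`|m a b| + sig hA hB a * tau hA hB b * (n%:R * C)) <= _).
  apply: ler_sum => a _; apply: (le_trans (ler_norm_sum _ _ _)); apply: ler_sum => b _.
  have s0 := hs.1 a; have s1 := simplex_le1 a hs.
  have t0 := ht.1 b; have t1 := simplex_le1 b ht.
  rewrite normrM (ger0_norm (mulr_ge0 s0 t0)).
  have h1 := ler_normD (m a b) (cont_payoff n sig tau m (rcons hA a) (rcons hB b)).
  have h2 := IH (rcons hA a) (rcons hB b) ltac:(rewrite !size_rcons; lia) ltac:(rewrite size_rcons; lia).
  have st0 : 0 <= sig hA hB a * tau hA hB b by exact: mulr_ge0.
  have st1 : sig hA hB a * tau hA hB b <= 1 by rewrite -(mulr1 1); apply: ler_pM.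
  have m0 : 0 <= `|m a b| by [].
  set X := `|m a b| in h1 m0 *; set Y := `|cont_payoff _ _ _ _ _ _| in h1 h2 *.
  set Z := `|_ + _| in h1 *. rewrite -/C in h2.
  set P := sig hA hB a * tau hA hB b in st0 st1 *; set W := n%:R * C in h2 *.
  have e1 : 0 <= P * (X + Y - Z) by apply: mulr_ge0 => //; lra.
  have e2 : 0 <= P * (W - Y) by apply: mulr_ge0 => //; lra.
  have e3 : 0 <= (1 - P) * X by apply: mulr_ge0 => //; lra.
  nra.
rewrite (eq_bigr _ (fun a _ => big_split _ _ _ _ _)) big_split /=.
rewrite sum_simplex2 // -/C -nat1r mulrDl mul1r; done.
Qed.


Variable (I : finType).

Definition Vmin (w : I -> R) (sig : I -> seq A -> seq B -> A -> R)
  (m : I -> A -> B -> R) n hA hB : R :=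
  inf [set v | exists tau, strat2 tau /\
    v = \sum_i w i * cont_payoff n (sig i) tau (m i) hA hB].

Lemma strat2_unif : (0 < #|B|)%N -> strat2 (fun (_ : seq A) (_ : seq B) (_ : B) => (#|B|%:R : R)^-1).
Proof. by move=> B0 hA hB; apply: uniform_simplex. Qed.

Lemma Vset_inf N (w : I -> R) (sig : I -> seq A -> seq B -> A -> R) (m : I -> A -> B -> R) n hA hB : (0 < #|B|)%N ->
  (forall i hA hB, size hA = size hB -> (size hA < N)%N -> in_simplex (sig i hA hB)) ->
  size hA = size hB -> (size hA + n <= N)%N ->
  has_inf [set v | exists tau, strat2 tau /\
    v = \sum_i w i * cont_payoff n (sig i) tau (m i) hA hB].
Proof.
move=> B0 Hs Hsz HN; split.
  by eexists; exists (fun (_ : seq A) (_ : seq B) (_ : B) => (#|B|%:R : R)^-1); split; [exact: strat2_unif|].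
exists (- \sum_i `|w i| * (n%:R * \sum_a \sum_b `|m i a b|)) => v [tau [Ht ->]].
rewrite -sumrN; apply: ler_sum => i _.
have := cont_bound (m i) (Hs i) Ht Hsz HN.
set c := cont_payoff _ _ _ _ _ _; set K := _ * _ => hc.
rewrite lerNl -mulrN.
apply: le_trans (ler_norm _) _; rewrite normrM normrN.
by apply: ler_wpM2l.
Qed.

Lemma F_decomp w (sig : I -> seq A -> seq B -> A -> R) tau m n hA hB :
  \sum_i w i * cont_payoff n.+1 (sig i) tau (m i) hA hB =
  \sum_b tau hA hB b * (\sum_i \sum_a (w i * sig i hA hB a) * m i a b +
     \sum_a \sum_i (w i * sig i hA hB a) *
        cont_payoff n (sig i) tau (m i) (rcons hA a) (rcons hB b)).
Proof.
rewrite /=.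
transitivity (\sum_i \sum_a \sum_b (tau hA hB b * ((w i * sig i hA hB a) * m i a b +
   (w i * sig i hA hB a) * cont_payoff n (sig i) tau (m i) (rcons hA a) (rcons hB b)))).
  apply: eq_bigr => i _; rewrite big_distrr; apply: eq_bigr => a _.
  rewrite big_distrr; apply: eq_bigr => b _ /=; ring.
rewrite [in RHS](eq_bigr (fun b => \sum_i \sum_a (tau hA hB b * ((w i * sig i hA hB a) * m i a b +
   (w i * sig i hA hB a) * cont_payoff n (sig i) tau (m i) (rcons hA a) (rcons hB b))))); last first.
  move=> b _; rewrite (exchange_big _ _ _ _ _ (fun a i => (w i * sig i hA hB a) * cont_payoff n (sig i) tau (m i) (rcons hA a) (rcons hB b))).
  rewrite -big_split /= big_distrr; apply: eq_bigr => i _ /=.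
  rewrite -big_split /= big_distrr; apply: eq_bigr => a _ /=; ring.
rewrite [RHS]exchange_big /=; apply: eq_bigr => i _; exact: exchange_big.
Qed.


Lemma min_simplex_has_inf (d : B -> R) : (0 < #|B|)%N ->
  has_inf [set v | exists tau : B -> R, in_simplex tau /\ v = \sum_b d b * tau b].
Proof.
move=> B0; split.
  by eexists; exists (fun _ : B => (#|B|%:R : R)^-1); split; [exact: uniform_simplex|].
exists (- \sum_b `|d b|) => v [tau [Ht ->]].
have := simplex_lb d Ht; congr (_ <= _); apply: eq_bigr => b _; exact: mulrC.
Qed.

Lemma Vmin_rec N (w : I -> R) (sig : I -> seq A -> seq B -> A -> R) (m : I -> A -> B -> R) n hA hB :
  (0 < #|A|)%N -> (0 < #|B|)%N ->
  (forall i hA hB, size hA = size hB -> (size hA < N)%N -> in_simplex (sig i hA hB)) ->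
  size hA = size hB -> (size hA + n.+1 <= N)%N ->
  Vmin w sig m n.+1 hA hB =
  min_simplex (fun b => \sum_i \sum_a (w i * sig i hA hB a) * m i a b +
     \sum_a Vmin (fun i => w i * sig i hA hB a) sig m n (rcons hA a) (rcons hB b)).
Proof.
move=> A0 B0 Hs Hsz HN.
set c := fun b => \sum_i \sum_a (w i * sig i hA hB a) * m i a b.
set W := fun a b tau => \sum_i (w i * sig i hA hB a) *
        cont_payoff n (sig i) tau (m i) (rcons hA a) (rcons hB b).
set Iab := fun a b => Vmin (fun i => w i * sig i hA hB a) sig m n (rcons hA a) (rcons hB b).
have HW : forall a b, has_inf [set v | exists tau, strat2 tau /\ v = W a b tau].
  move=> a b; apply: (@Vset_inf N (fun i => w i * sig i hA hB a) sig m n (rcons hA a) (rcons hB b) B0 Hs); rewrite ?size_rcons; lia.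
have HI : forall a b tau, strat2 tau -> Iab a b <= W a b tau.
  move=> a b tau Ht; apply: (ge_inf (HW a b).2); by exists tau.
have H1 := Vset_inf w m B0 Hs Hsz HN.
have H2 := min_simplex_has_inf (fun b => c b + \sum_a Iab a b) B0.
have Eset : [set v | exists tau, strat2 tau /\
    v = \sum_i w i * cont_payoff n.+1 (sig i) tau (m i) hA hB] =
  [set v | exists tau, strat2 tau /\ v =
   \sum_b tau hA hB b * (c b + \sum_a W a b tau)].
  by apply/seteqP; split => v [tau [Ht ->]]; exists tau; rewrite F_decomp.
have H1' : has_inf [set v | exists tau, strat2 tau /\ v =
   \sum_b tau hA hB b * (c b + \sum_a W a b tau)] by rewrite -Eset.
rewrite [LHS]/Vmin Eset /min_simplex.
apply/eqP; rewrite eq_le; apply/andP; split.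
- apply: lb_le_inf; first by case: H2.
  move=> v [t0 [Ht0 ->]].
  apply/ler_addgt0Pr => e e0.
  have eps0 : 0 < e / #|A|%:R by apply: divr_gt0 => //; rewrite ltr0n.
  have : forall ab : A * B, exists tau, strat2 tau /\ W ab.1 ab.2 tau < Iab ab.1 ab.2 + e / #|A|%:R.
    move=> [a b] /=; have [v' [tau [Ht ->]] Hlt] := inf_adherent eps0 (HW a b).
    by exists tau.
  move=> /choice [tf Htf].
  pose ts := fun (hA' : seq A) (hB' : seq B) =>
    match drop (size hA) hA', drop (size hB) hB' with
    | a :: _, b :: _ => tf (a, b) hA' hB'
    | _, _ => t0 end.
  have Hts : strat2 ts.
    move=> hA' hB'; rewrite /ts; case: (drop _ hA') => [|a ?]; first exact: Ht0.
    case: (drop _ hB') => [|b ?]; first exact: Ht0.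
    exact: (Htf (a, b)).1.
  have Hroot : ts hA hB = t0 by rewrite /ts !drop_size.
  have Hsub : forall a b, W a b ts = W a b (tf (a, b)).
    move=> a b; apply: eq_bigr => i _; congr (_ * _); apply: cont_local => s1 s2.
    by rewrite /ts !cat_rcons !drop_size_cat.
  apply: le_trans (_ : \sum_b ts hA hB b * (c b + \sum_a W a b ts) <= _).
    by apply: (ge_inf H1'.2); exists ts.
  rewrite Hroot.
  apply: le_trans (_ : \sum_b t0 b * (c b + \sum_a Iab a b) + \sum_b t0 b * e <= _); last first.
    rewrite -big_distrl /= Ht0.2 mul1r lerD2r; apply: ler_sum => b _; rewrite mulrC //.
  rewrite -big_split; apply: ler_sum => b _ /=; rewrite -mulrDr; apply: ler_wpM2l; first exact: Ht0.1.
  rewrite -addrA lerD2l.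
  have -> : e = \sum_(a : A) (e / #|A|%:R).
    rewrite sumr_const -[_ *+ #|_|]mulr_natr (_ : #|xpredT| = #|A|) //.
    rewrite divfK // pnatr_eq0; lia.
  rewrite -big_split; apply: ler_sum => a _ /=; rewrite Hsub.
  exact: ltW (Htf (a, b)).2.
- apply: lb_le_inf; first by case: H1'.
  move=> v [tau [Ht ->]].
  apply: le_trans (_ : \sum_b (c b + \sum_a Iab a b) * tau hA hB b <= _).
    by apply: (ge_inf H2.2); exists (tau hA hB).
  apply: ler_sum => b _; rewrite mulrC; apply: ler_wpM2l; first exact: (Ht hA hB).1.
  rewrite lerD2l; apply: ler_sum => a _; exact: HI.
Qed.

End Core.

Section Beh.
Variables (R : realType) (K A B : finType).

Lemma parent1_rcons (p : K -> R) (x : K -> seq A -> seq B -> A -> R) k hA hB a b :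
  parent1 p x k (rcons hA a) (rcons hB b) = x k hA hB a.
Proof.
case: hA => [|a1 hA]; case: hB => [|b1 hB] //=;
  by rewrite ?belast_rcons ?last_rcons.
Qed.

Lemma sum_parent1 T (p : K -> R) (x : K -> seq A -> seq B -> A -> R) k hA hB : realization_plan1 T p x ->
  size hA = size hB -> (size hA < T)%N ->
  \sum_a x k hA hB a = parent1 p x k hA hB.
Proof.
case=> _ H2 H3; case/lastP: hA => [|hA a]; case/lastP: hB => [|hB b] /=.
- by move=> _ _; exact: H2.
- by rewrite size_rcons.
- by rewrite size_rcons.
rewrite !size_rcons => -[Hs] HT.
by rewrite parent1_rcons H3.
Qed.

Lemma parent1_ge0 T (p : K -> R) (x : K -> seq A -> seq B -> A -> R) k hA hB : (forall k, 0 < p k) -> realization_plan1 T p x ->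
  size hA = size hB -> (size hA < T)%N -> 0 <= parent1 p x k hA hB.
Proof.
move=> Hp [H1 _ _]; case/lastP: hA => [|hA a]; case/lastP: hB => [|hB b] /=.
- by move=> _ _; exact: ltW.
- by rewrite size_rcons.
- by rewrite size_rcons.
rewrite !size_rcons => -[Hs] HT.
rewrite parent1_rcons; apply: H1 => //; lia.
Qed.

Lemma beh1_simplex T (p : K -> R) (x : K -> seq A -> seq B -> A -> R) k hA hB : (0 < #|A|)%N -> (forall k, 0 < p k) ->
  realization_plan1 T p x ->
  size hA = size hB -> (size hA < T)%N -> in_simplex (beh1 p x k hA hB).
Proof.
move=> A0 Hp Hx Hs HT; rewrite /beh1.
case: eqP => [_|/eqP d0]; first exact: uniform_simplex.
have dge := parent1_ge0 k Hp Hx Hs HT.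
split=> [a|].
  apply: divr_ge0 => //; case: Hx => H1 _ _; exact: H1.
by rewrite -big_distrl /= (sum_parent1 k Hx Hs HT) mulfV.
Qed.

Lemma beh1_weight T (p : K -> R) (x : K -> seq A -> seq B -> A -> R) k hA hB a a' b : realization_plan1 T p x ->
  size hA = size hB -> ((size hA).+1 < T)%N ->
  x k hA hB a * beh1 p x k (rcons hA a) (rcons hB b) a' = x k (rcons hA a) (rcons hB b) a'.
Proof.
move=> Hx Hs HT; rewrite /beh1 parent1_rcons.
case: eqP => [d0|/eqP d0]; last by rewrite mulrCA mulfV ?mulr1.
rewrite d0 mul0r; symmetry.
have Hsum : \sum_a'' x k (rcons hA a) (rcons hB b) a'' = 0.
  by case: Hx => _ _ H3; rewrite H3.
apply: (psumr_eq0P _ Hsum) => // i _.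
case: Hx => H1 _ _; apply: H1; rewrite ?size_rcons; lia.
Qed.

Lemma beh1_root (p : K -> R) (x : K -> seq A -> seq B -> A -> R) k a : (forall k, 0 < p k) ->
  p k * beh1 p x k [::] [::] a = x k [::] [::] a.
Proof.
move=> Hp; rewrite /beh1 /=; have := Hp k; rewrite lt0r => /andP[pn0 _].
by rewrite (negbTE pn0) mulrCA mulfV ?mulr1.
Qed.

End Beh.

Section Ustuff.
Variables (R : realType) (K L A B : finType).

Lemma Vmin0 (I : finType) (w : I -> R) (sig : I -> seq A -> seq B -> A -> R) m hA hB :
  (0 < #|B|)%N -> Vmin w sig m 0 hA hB = 0.
Proof.
move=> B0; rewrite /Vmin /= (_ : [set v | _] = [set 0]) ?inf1 //.
apply/seteqP; split => v.
  by move=> [tau [_ ->]]; rewrite /= big1 // => i _; rewrite mulr0.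
move=> -> /=; exists (fun (_ : seq A) (_ : seq B) (_ : B) => (#|B|%:R : R)^-1); split.
  exact: strat2_unif.
by rewrite big1 // => i _; rewrite mulr0.
Qed.

Lemma u_ab_Vmin T (M : K -> L -> A -> B -> R) p x l hA hB a b : (0 < #|B|)%N ->
  u_ab T M p x l hA hB a b =
  Vmin (fun k => x k hA hB a) (beh1 p x) (fun k => M k l) (T - (size hA).+1)
    (rcons hA a) (rcons hB b).
Proof.
move=> B0; rewrite /u_ab; case: ifP => // HT.
by rewrite (_ : T - _ = 0)%N ?Vmin0 //; lia.
Qed.

Lemma u_root T (M : K -> L -> A -> B -> R) p x l :
  (0 < #|A|)%N -> (0 < #|B|)%N -> (0 < T)%N ->
  (forall k, 0 < p k) -> realization_plan1 T p x ->
  u_0 T M p x l =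
  min_simplex (fun b : B =>
    \sum_(k : K) \sum_(a : A) x k [::] [::] a * M k l a b
    + \sum_(a : A) u_ab T M p x l [::] [::] a b).
Proof.
move=> A0 B0 T0 Hp Hx.
case: T T0 Hx => [//|n] _ Hx.
change (u_0 n.+1 M p x l) with (Vmin p (beh1 p x) (fun k => M k l) n.+1 [::] [::]).
rewrite (Vmin_rec (N := n.+1)) //; last first.
  by move=> k hA hB; apply: beh1_simplex.
congr (min_simplex _); apply: funext => b; congr (_ + _).
  apply: eq_bigr => k _; apply: eq_bigr => a _; by rewrite beh1_root.
apply: eq_bigr => a _; rewrite u_ab_Vmin //= subSS subn0.
by congr Vmin; apply: funext => k; rewrite beh1_root.
Qed.

Lemma u_stage T (M : K -> L -> A -> B -> R) p x l hA hB a b :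
  (0 < #|A|)%N -> (0 < #|B|)%N ->
  (forall k, 0 < p k) -> realization_plan1 T p x ->
  size hA = size hB -> ((size hA).+1 < T)%N ->
  u_ab T M p x l hA hB a b =
  min_simplex (fun b' : B =>
    \sum_(k : K) \sum_(a' : A) x k (rcons hA a) (rcons hB b) a' * M k l a' b'
    + \sum_(a' : A) u_ab T M p x l (rcons hA a) (rcons hB b) a' b').
Proof.
move=> A0 B0 Hp Hx Hs HT.
rewrite u_ab_Vmin // (_ : (T - (size hA).+1 = (T - (size hA).+2).+1)%N); last by lia.
rewrite (Vmin_rec (N := T)) //; first last.
- rewrite size_rcons; lia.
- by rewrite !size_rcons Hs.
- by move=> k hA' hB'; apply: beh1_simplex.
congr (min_simplex _); apply: funext => b'; congr (_ + _).
  apply: eq_bigr => k _; apply: eq_bigr => a' _; by rewrite (beh1_weight _ _ _ _ Hx).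
apply: eq_bigr => a' _; rewrite u_ab_Vmin // size_rcons.
by congr Vmin; apply: funext => k; rewrite (beh1_weight _ _ _ _ Hx).
Qed.

End Ustuff.

Section Wstuff.
Variables (R : realType) (K L A B : finType).

Definition swapS (A' B' : finType) (C : Type) (f : seq A' -> seq B' -> C -> R) :
  seq B' -> seq A' -> C -> R := fun hB hA => f hA hB.

Lemma cont_swap n (sig : seq A -> seq B -> A -> R) (tau : seq A -> seq B -> B -> R) m hA hB :
  cont_payoff n sig tau m hA hB =
  - cont_payoff n (swapS tau) (swapS sig) (fun b a => - m a b) hB hA.
Proof.
elim: n hA hB => [|n IH] hA hB /=; first by rewrite oppr0.
rewrite exchange_big -sumrN; apply: eq_bigr => b _; rewrite -sumrN; apply: eq_bigr => a _.
rewrite IH /swapS; ring.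
Qed.

Definition yswap (y : L -> seq A -> seq B -> B -> R) : L -> seq B -> seq A -> B -> R :=
  fun l hB hA b => y l hA hB b.

Lemma rp2_rp1 T (q : L -> R) y : realization_plan2 T q y -> realization_plan1 T q (yswap y).
Proof.
case=> H1 H2 H3; split.
- move=> l hB hA b Hs HT; apply: H1 => //; lia.
- exact: H2.
- move=> l hB hA b a Hs HT; apply: H3 => //; lia.
Qed.

Lemma beh2_swap (q : L -> R) y l hA hB b :
  beh2 q y l hA hB b = beh1 q (yswap y) l hB hA b.
Proof.
rewrite /beh2 /beh1.
have -> : parent2 q y l hA hB = parent1 q (yswap y) l hB hA.
  by case: hA => [|a1 hA]; case: hB => [|b1 hB].
by [].
Qed.

Lemma supE (E : set R) : sup E = - inf [set - v | v in E].
Proof.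
rewrite /inf opprK; congr sup; apply/seteqP; split => v.
  by move=> Ev; exists (- v); [exists v|rewrite opprK].
by move=> [_ [w Ew <-] <-]; rewrite opprK.
Qed.

Definition Mswap (M : K -> L -> A -> B -> R) (k : K) : L -> unit -> B -> A -> R :=
  fun l _ b a => - M k l a b.

Lemma wset_swap n (M : K -> L -> A -> B -> R) (q : L -> R) y k (om : L -> R) hA hB :
  [set - v | v in [set v | exists sig, strat1 sig /\
      v = \sum_l om l * cont_payoff n sig (beh2 q y l) (M k l) hA hB]] =
  [set v | exists tau, strat2 tau /\
      v = \sum_l om l * cont_payoff n (beh1 q (yswap y) l) tau (fun b a => Mswap M k l tt b a) hB hA].
Proof.
have E : forall sig : seq A -> seq B -> A -> R,
  \sum_l om l * cont_payoff n sig (beh2 q y l) (M k l) hA hB =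
  - \sum_l om l * cont_payoff n (beh1 q (yswap y) l) (swapS sig) (fun b a => Mswap M k l tt b a) hB hA.
  move=> sig; rewrite -sumrN; apply: eq_bigr => l _; rewrite cont_swap mulrN; congr (- (_ * _)).
  congr (cont_payoff _ _ _ _ _ _); apply: funext => hB'; apply: funext => hA'.
  by apply: funext => b; rewrite /swapS beh2_swap.
apply/seteqP; split => v.
  move=> [_ [sig [Hs ->]] <-]; exists (swapS sig); split; first by move=> ? ?; apply: Hs.
  by rewrite E opprK.
move=> [tau [Ht Hv]]; exists (- v); last by rewrite opprK.
exists (swapS tau); split; first by move=> ? ?; apply: Ht.
by rewrite E Hv.
Qed.

Lemma w_0_u T (M : K -> L -> A -> B -> R) q y k :
  w_0 T M q y k = - u_0 T (Mswap M k) q (yswap y) tt.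
Proof. by rewrite /w_0 supE wset_swap. Qed.

Lemma w_ab_u T (M : K -> L -> A -> B -> R) q y k hA hB a b :
  (0 < #|A|)%N -> size hA = size hB ->
  w_ab T M q y k hA hB a b = - u_ab T (Mswap M k) q (yswap y) tt hB hA b a.
Proof.
move=> A0 Hs; rewrite /w_ab /u_ab -Hs; case: ifP => _; last by rewrite oppr0.
by rewrite supE wset_swap.
Qed.

Lemma max_simplexE (f : A -> R) : max_simplex f = - min_simplex (fun a => - f a).
Proof.
rewrite /max_simplex /min_simplex supE; congr (- inf _); apply/seteqP; split => v.
  move=> [_ [sig [Hs ->]] <-]; exists sig; split => //.
  by rewrite -sumrN; apply: eq_bigr => a _; rewrite mulNr mulrC.
move=> [sig [Hs ->]]; exists (\sum_a sig a * f a); first by exists sig.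
by rewrite -sumrN; apply: eq_bigr => a _; rewrite mulNr mulrC.
Qed.

End Wstuff.

Theorem lemma1 (R : realType) (K L A B : finType)
  (M : K -> L -> A -> B -> R) (p : K -> R) (q : L -> R) (T : nat)
  (x : K -> seq A -> seq B -> A -> R) (y : L -> seq A -> seq B -> B -> R) :
  (0 < #|A|)%N -> (0 < #|B|)%N -> (0 < T)%N ->
  (forall k, 0 < p k) -> \sum_(k : K) p k = 1 ->
  (forall l, 0 < q l) -> \sum_(l : L) q l = 1 ->
  realization_plan1 T p x -> realization_plan2 T q y ->
  [/\ (forall l : L,
        u_0 T M p x l =
        min_simplex (fun b : B =>
          \sum_(k : K) \sum_(a : A) x k [::] [::] a * M k l a b
          + \sum_(a : A) u_ab T M p x l [::] [::] a b)),
      (forall k : K,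
        w_0 T M q y k =
        max_simplex (fun a : A =>
          \sum_(l : L) \sum_(b : B) M k l a b * y l [::] [::] b
          + \sum_(b : B) w_ab T M q y k [::] [::] a b)),
      (forall (l : L) (t : nat) (hA : seq A) (hB : seq B) (a : A) (b : B),
        (1 <= t)%N -> (t <= T - 1)%N -> size hA = t.-1 -> size hB = t.-1 ->
        u_ab T M p x l hA hB a b =
        min_simplex (fun b' : B =>
          \sum_(k : K) \sum_(a' : A) x k (rcons hA a) (rcons hB b) a' * M k l a' b'
          + \sum_(a' : A) u_ab T M p x l (rcons hA a) (rcons hB b) a' b')) &
      (forall (k : K) (t : nat) (hA : seq A) (hB : seq B) (a : A) (b : B),
        (1 <= t)%N -> (t <= T - 1)%N -> size hA = t.-1 -> size hB = t.-1 ->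
        w_ab T M q y k hA hB a b =
        max_simplex (fun a' : A =>
          \sum_(l : L) \sum_(b' : B) M k l a' b' * y l (rcons hA a) (rcons hB b) b'
          + \sum_(b' : B) w_ab T M q y k (rcons hA a) (rcons hB b) a' b'))].

Proof.
move=> A0 B0 T0 Hp Hp1 Hq Hq1 Hx Hy.
have Hy' := rp2_rp1 Hy.
split.
- move=> l; exact: u_root.
- move=> k; rewrite w_0_u (u_root _ tt B0 A0 T0 Hq Hy') max_simplexE.
  congr (- min_simplex _); apply: funext => a.
  rewrite opprD -!sumrN; congr (_ + _).
    apply: eq_bigr => l _; rewrite -sumrN; apply: eq_bigr => b _.
    by rewrite /yswap /Mswap mulrN mulrC.
  by apply: eq_bigr => b _; rewrite w_ab_u // opprK.
- move=> l t hA hB a b t1 tT HA HB.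
  apply: u_stage => //; rewrite ?HA ?HB //; lia.
- move=> k t hA hB a b t1 tT HA HB.
  have Hs : size hA = size hB by rewrite HA HB.
  rewrite (w_ab_u _ _ _ _ _ _ _ A0 Hs) (u_stage _ tt b a B0 A0 Hq Hy'); last 2 first.
  + by rewrite Hs.
  + rewrite HB; lia.
  rewrite max_simplexE; congr (- min_simplex _); apply: funext => a'.
  rewrite opprD -!sumrN; congr (_ + _).
    apply: eq_bigr => l _; rewrite -sumrN; apply: eq_bigr => b' _.
    by rewrite /yswap /Mswap mulrN mulrC.
  apply: eq_bigr => b' _; rewrite w_ab_u ?opprK //.
  by rewrite !size_rcons Hs.
Qed.
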